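(* Fix $n\in\mathbb N$ and for $j\in\mathbb Z$ put $\kappa(j)=\cos\big(\tfrac{j\pi}{2(n+1)}\big)$ and $\lambda(j)=\sin\big(\tfrac{j\pi}{2(n+1)}\big)$. Let $a\in\mathbb Z$ and let $f,g,h\in\{\kappa,-\kappa,\lambda,-\lambda\}$. (1) If $m\in2\mathbb Z$ and $|m|\le 2n$, then $\sum_{j=0}^{2n+1}(-1)^j f(a+mj)=0$. (2) If $s,t\in\mathbb Z$ with $\max\{|s|,|t|\}\le n-1$ and $s\equiv t\pmod 2$, then \[\sum_{j=0}^{2n+1}(-1)^j f(a+2j)\,g(sj)\,h(tj)=0=\sum_{j=0}^{2n+1}(-1)^j g(sj)\,h(tj).\] *)

(* Defs.v *)
From Stdlib Require Import Reals ZArith.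
Open Scope R_scope.

Definition kappa (n : nat) (j : Z) : R := cos (IZR j * PI / (2 * (INR n + 1))).
Definition lambda (n : nat) (j : Z) : R := sin (IZR j * PI / (2 * (INR n + 1))).

Definition admissible (n : nat) (f : Z -> R) : Prop :=
  f = kappa n \/ f = (fun j => - kappa n j) \/
  f = lambda n \/ f = (fun j => - lambda n j).

(* Main.v *)
Require Import Defs.
From Stdlib Require Import Reals ZArith Lra Lia.
Open Scope R_scope.

Definition th (n : nat) : R := PI / (2 * (INR n + 1)).

Lemma sin_diff (x h : R) : sin (x + h) - sin (x - h) = 2 * cos x * sin h.
Proof. rewrite sin_plus, sin_minus. ring. Qed.

Lemma cos_jpi (x : R) (j : nat) : cos (x + INR j * PI) = (-1) ^ j * cos x.
Proof.
  induction j as [|j IH].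
  - simpl. replace (x + 0 * PI) with x by ring. ring.
  - rewrite S_INR. replace (x + (INR j + 1) * PI) with ((x + INR j * PI) + PI) by ring.
    rewrite neg_cos, IH. simpl. ring.
Qed.

Lemma telesc (c p : R) (K : nat) :
  2 * sin (p / 2) * sum_f_R0 (fun j => cos (c + INR j * p)) K
  = sin (c + (INR K + / 2) * p) - sin (c - p / 2).
Proof.
  induction K as [|K IH].
  - simpl. replace (c + 0 * p) with c by ring.
    replace (c + (0 + /2) * p) with (c + p/2) by field.
    rewrite sin_diff. ring.
  - rewrite tech5, Rmult_plus_distr_l, IH, S_INR.
    replace (2 * sin (p / 2) * cos (c + (INR K + 1) * p))
      with (2 * cos (c + (INR K + 1) * p) * sin (p / 2)) by ring.
    rewrite <- (sin_diff (c + (INR K + 1) * p) (p / 2)).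
    replace (c + (INR K + 1) * p - p / 2) with (c + (INR K + / 2) * p) by field.
    replace (c + (INR K + 1) * p + p / 2) with (c + (INR K + 1 + / 2) * p) by field.
    ring.
Qed.

Lemma Kmain (n : nat) (m : Z) (c : R) :
  Z.Even m -> (Z.abs m <= 2 * Z.of_nat n)%Z ->
  sum_f_R0 (fun j => (-1) ^ j * cos (c + IZR m * INR j * th n)) (2 * n + 1) = 0.
Proof.
  intros [q Hq] Hm.
  set (p := IZR m * th n + PI).
  assert (E : forall j, (-1) ^ j * cos (c + IZR m * INR j * th n) = cos (c + INR j * p)).
  { intro j. rewrite <- cos_jpi. f_equal. unfold p. ring. }
  rewrite (sum_eq _ _ _ (fun j _ => E j)).
  set (D := 2 * (INR n + 1)).
  assert (HD : 0 < D) by (unfold D; pose proof (pos_INR n); lra).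
  assert (Hmlo : - (2 * INR n) <= IZR m).
  { rewrite INR_IZR_INZ. replace (- (2 * IZR (Z.of_nat n))) with (IZR (- (2 * Z.of_nat n))).
    apply IZR_le. lia. rewrite opp_IZR, mult_IZR. reflexivity. }
  assert (Hmhi : IZR m <= 2 * INR n).
  { rewrite INR_IZR_INZ. replace (2 * IZR (Z.of_nat n)) with (IZR (2 * Z.of_nat n)).
    apply IZR_le. lia. rewrite mult_IZR. reflexivity. }
  assert (Hp2 : p / 2 = PI * ((IZR m + D) / (2 * D))).
  { unfold p, th. fold D. field. lra. }
  assert (Hs : sin (p / 2) <> 0).
  { apply Rgt_not_eq. apply sin_gt_0; rewrite Hp2.
    - apply Rmult_lt_0_compat. exact PI_RGT_0.
      apply Rdiv_lt_0_compat; unfold D in *; lra.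
    - rewrite <- (Rmult_1_r PI) at 2. apply Rmult_lt_compat_l. exact PI_RGT_0.
      apply (Rmult_lt_reg_r (2 * D)). lra.
      unfold Rdiv. rewrite Rmult_assoc, Rinv_l by lra. unfold D in *. lra. }
  pose proof (telesc c p (2 * n + 1)) as T.
  set (k := Z.to_nat (q + Z.of_nat n + 1)).
  assert (Hk : IZR m + D = 2 * INR k).
  { unfold k, D. rewrite (INR_IZR_INZ (Z.to_nat _)), Z2Nat.id by lia.
    rewrite Hq, !plus_IZR, mult_IZR, INR_IZR_INZ. simpl. ring. }
  assert (Ha : c + (INR (2 * n + 1) + / 2) * p = (c - p / 2) + 2 * INR k * PI).
  { rewrite <- Hk. unfold p, th. fold D.
    replace (INR (2 * n + 1)) with (D - 1).
    field. lra.
    unfold D. rewrite plus_INR, mult_INR. simpl. ring. }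
  rewrite Ha, sin_period, Rminus_diag in T.
  apply Rmult_integral in T. destruct T as [T|T]; [|exact T].
  exfalso. apply Hs. lra.
Qed.

Lemma Kgen (n : nat) (m : Z) (C : R) (F : nat -> R) :
  Z.Even m -> (Z.abs m <= 2 * Z.of_nat n)%Z ->
  (forall j, F j = C + IZR m * INR j * th n) ->
  sum_f_R0 (fun j => (-1) ^ j * cos (F j)) (2 * n + 1) = 0.
Proof.
  intros He Hm HF.
  rewrite (sum_eq _ (fun j => (-1) ^ j * cos (C + IZR m * INR j * th n))).
  - apply Kmain; auto.
  - intros j _. rewrite HF. reflexivity.
Qed.

Lemma sumk (X : nat -> R) (k : R) (N : nat) :
  sum_f_R0 (fun j => X j * k) N = sum_f_R0 X N * k.
Proof. rewrite Rmult_comm, scal_sum. reflexivity. Qed.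

Lemma adm (n : nat) (f : Z -> R) : admissible n f ->
  exists s c, forall k, f k = s * cos (c + IZR k * th n).
Proof.
  unfold admissible, kappa, lambda, th.
  intros [H|[H|[H|H]]]; subst f.
  - exists 1, 0. intro k. rewrite Rplus_0_l, Rmult_1_l. f_equal. unfold Rdiv. ring.
  - exists (-1), 0. intro k. rewrite Rplus_0_l. replace (IZR k * (PI / (2 * (INR n + 1)))) with (IZR k * PI / (2 * (INR n + 1))). ring. unfold Rdiv. ring.
  - exists 1, (- (PI/2)). intro k. rewrite Rmult_1_l, <- cos_shift, <- cos_neg. f_equal. unfold Rdiv. ring.
  - exists (-1), (- (PI/2)). intro k. rewrite <- cos_shift, <- cos_neg.
    replace (- (PI / 2 - IZR k * PI / (2 * (INR n + 1)))) with (- (PI / 2) + IZR k * (PI / (2 * (INR n + 1)))). ring. unfold Rdiv. ring.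
Qed.

Lemma prod3 (e a b c A B C : R) :
  e * (a * cos A) * (b * cos B) * (c * cos C) =
  (e * cos (A + B + C) + e * cos (A + B - C) + e * cos (A - B + C) + e * cos (A - B - C)) * (a * b * c / 4).
Proof.
  rewrite ?cos_plus, ?sin_plus, ?cos_minus, ?sin_minus, ?cos_plus, ?sin_plus, ?cos_minus, ?sin_minus.
  field.
Qed.

Lemma prod2 (e b c B C : R) :
  e * (b * cos B) * (c * cos C) =
  (e * cos (B + C) + e * cos (B - C)) * (b * c / 2).
Proof. rewrite cos_plus, cos_minus. field. Qed.

Ltac zexp := intro j; repeat rewrite ?plus_IZR, ?minus_IZR, ?opp_IZR, ?mult_IZR; rewrite <- ?INR_IZR_INZ; ring.

Theorem lemma4p10 (n : nat) (a : Z) (f g h : Z -> R)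
  (Hf : admissible n f) (Hg : admissible n g) (Hh : admissible n h) :
  (forall m : Z, Z.Even m -> (Z.abs m <= 2 * Z.of_nat n)%Z ->
     sum_f_R0 (fun j => (-1) ^ j * f (a + m * Z.of_nat j)%Z) (2 * n + 1) = 0)
  /\
  (forall s t : Z, (Z.max (Z.abs s) (Z.abs t) <= Z.of_nat n - 1)%Z ->
     Z.Even (s - t) ->
     sum_f_R0 (fun j => (-1) ^ j * f (a + 2 * Z.of_nat j)%Z
                         * g (s * Z.of_nat j)%Z * h (t * Z.of_nat j)%Z) (2 * n + 1) = 0
     /\
     sum_f_R0 (fun j => (-1) ^ j * g (s * Z.of_nat j)%Z * h (t * Z.of_nat j)%Z)
       (2 * n + 1) = 0).
Proof.
  destruct (adm n f Hf) as (sf & cf & Ef).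
  destruct (adm n g Hg) as (sg & cg & Eg).
  destruct (adm n h Hh) as (sh & ch & Eh).
  split.
  - intros m Hm Hab.
    rewrite (sum_eq _ (fun j => (-1) ^ j * cos (cf + IZR (a + m * Z.of_nat j) * th n) * sf)).
    + rewrite sumk, (Kgen n m (cf + IZR a * th n)); [ring | auto | auto | zexp].
    + intros j _. rewrite Ef. ring.
  - intros s t Hst [r Hr]. split.
    + rewrite (sum_eq _ (fun j =>
         ((-1) ^ j * cos ((cf + IZR (a + 2 * Z.of_nat j) * th n) + (cg + IZR (s * Z.of_nat j) * th n) + (ch + IZR (t * Z.of_nat j) * th n))
        + (-1) ^ j * cos ((cf + IZR (a + 2 * Z.of_nat j) * th n) + (cg + IZR (s * Z.of_nat j) * th n) - (ch + IZR (t * Z.of_nat j) * th n))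
        + (-1) ^ j * cos ((cf + IZR (a + 2 * Z.of_nat j) * th n) - (cg + IZR (s * Z.of_nat j) * th n) + (ch + IZR (t * Z.of_nat j) * th n))
        + (-1) ^ j * cos ((cf + IZR (a + 2 * Z.of_nat j) * th n) - (cg + IZR (s * Z.of_nat j) * th n) - (ch + IZR (t * Z.of_nat j) * th n)))
        * (sf * sg * sh / 4))).
      * rewrite sumk, !sum_plus.
        rewrite (Kgen n (2 + s + t) (cf + IZR a * th n + cg + ch)); [|exists (1 + r + t)%Z; lia|lia|zexp].
        rewrite (Kgen n (2 + s - t) (cf + IZR a * th n + cg - ch)); [|exists (1 + r)%Z; lia|lia|zexp].
        rewrite (Kgen n (2 - s + t) (cf + IZR a * th n - cg + ch)); [|exists (1 - r)%Z; lia|lia|zexp].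
        rewrite (Kgen n (2 - s - t) (cf + IZR a * th n - cg - ch)); [|exists (1 - r - t)%Z; lia|lia|zexp].
        ring.
      * intros j _. rewrite Ef, Eg, Eh. apply prod3.
    + rewrite (sum_eq _ (fun j =>
         ((-1) ^ j * cos ((cg + IZR (s * Z.of_nat j) * th n) + (ch + IZR (t * Z.of_nat j) * th n))
        + (-1) ^ j * cos ((cg + IZR (s * Z.of_nat j) * th n) - (ch + IZR (t * Z.of_nat j) * th n)))
        * (sg * sh / 2))).
      * rewrite sumk, !sum_plus.
        rewrite (Kgen n (s + t) (cg + ch)); [|exists (r + t)%Z; lia|lia|zexp].
        rewrite (Kgen n (s - t) (cg - ch)); [|exists r; lia|lia|zexp].
        ring.
      * intros j _. rewrite Eg, Eh. apply prod2.
Qed.
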